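(* Let $V$ be a finite-dimensional complex vector space with a Hermitian inner product, $\mathbf G$ a finite group of unitary transformations of $V$, $\mathbf x_0\in V$ a unit vector with full orbit under $\mathbf G$, $\{I\}=\mathbf G_0<\cdots<\mathbf G_m=\mathbf G$ a subgroup sequence, and $\operatorname{CL}(\mathbf G_k/\mathbf G_{k-1})$ ($1\le k\le m$) coset leader sets. If for every $k$ with $1\le k<m$ every induced coset leader in $\operatorname{CL}(\mathbf G/\mathbf G_k)$ is minimal, then the subgroup decoding algorithm decodes correctly with some noise.
   Context: Full orbit: $|\mathbf G\mathbf x_0|=|\mathbf G|$; then $\operatorname{Stab}_{\mathbf G}(\mathbf x_0)=\{I\}$. $\operatorname{CL}(\mathbf G_k/\mathbf G_{k-1})$ is a set of representatives of the left cosets of $\mathbf G_{k-1}$ in $\mathbf G_k$ containing $I$; induced coset leaders $\operatorname{CL}(\mathbf G_l/\mathbf G_k)=\{c_l\cdots c_{k+1}:c_i\in\operatorname{CL}(\mathbf G_i/\mathbf G_{i-1})\}$. Subgroup decoding algorithm: given $\mathbf r$, set $\mathbf r_0=\mathbf r$; for $k=1,\dots,m$ choose $d_k\in\operatorname{CL}(\mathbf G_k/\mathbf G_{k-1})$ minimizing $\|a\mathbf r_{k-1}-\mathbf x_0\|$ over $a\in\operatorname{CL}(\mathbf G_k/\mathbf G_{k-1})$ (ties broken by a fixed ordering), set $\mathbf r_k=d_k\mathbf r_{k-1}$; output $g'=d_m\cdots d_1$. It decodes correctly with some noise if there is $\delta>0$ such that for all $g\in\mathbf G$ and $\mathbf r$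 with $\|\mathbf r-g^{-1}\mathbf x_0\|<\delta$ the output is $g$. For a subgroup $H$, $\operatorname{FR}(H)=\{\mathbf x:\|\mathbf x-\mathbf x_0\|<\|h\mathbf x-\mathbf x_0\|\ \forall h\in H\setminus\operatorname{Stab}_H(\mathbf x_0)\}$. For $H\le K$, a coset representative $c$ of $H$ in $K$ is minimal if $\mathbf x_0\in c(\operatorname{FR}(H))$. *)

(* Defs.v *)
(* complex numbers R[i] over an arbitrary R : realType (i.e. C),
   V = C^n as column vectors with the standard Hermitian inner product,
   the finite group G given as a group gT with a matrix representation rG. *)
From HB Require Import structures.
From mathcomp Require Import all_boot all_order all_algebra all_fingroup.
From mathcomp Require Import mxrepresentation.
From mathcomp Require Import complex.
From mathcomp Require Import reals.

Set Implicit Arguments.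
Unset Strict Implicit.
Unset Printing Implicit Defensive.

Import Order.TTheory GRing.Theory Num.Theory.
Local Open Scope ring_scope.
Local Open Scope group_scope.

Section Defs.
Variable R : realType.
Local Notation C := R[i].

Definition cnorm2 (z : C) : R := complex.Re z ^+ 2 + complex.Im z ^+ 2.

Definition vnorm n (x : 'cV[C]_n) : R := Num.sqrt (\sum_(i < n) cnorm2 (x i 0)).

Definition adjmx n (A : 'M[C]_n) : 'M[C]_n := (map_mx (@conjc R) A)^T.
Definition unitary_mx n (A : 'M[C]_n) : Prop := (A *m adjmx A = 1%:M)%R.

Variables (gT : finGroupType) (G : {group gT}) (n : nat).
Variable rG : mx_representation C G n.
Variable x0 : 'cV[C]_n.

Definition full_orbit : Prop :=
  size (undup [seq (rG g *m x0)%R | g in G]) = #|G|.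

Definition coset_leaders (H K : {set gT}) (CL : {set gT}) : Prop :=
  [/\ CL \subset K, 1 \in CL &
      forall x, x \in K -> exists! c, c \in CL /\ x \in c *: H].

(* induced coset leaders CL(G_l / G_k) = { c_l ... c_{k+1} } *)
Fixpoint ind_CL (CL : nat -> {set gT}) (k l : nat) : {set gT} :=
  match l with
  | 0 => [set 1]
  | l'.+1 => if (k < l'.+1)%N then CL l'.+1 * ind_CL CL k l' else [set 1]
  end.

Definition stab (H : {set gT}) : {set gT} :=
  [set h in H | (rG h *m x0)%R == x0].

Definition FR (H : {set gT}) (x : 'cV[C]_n) : Prop :=
  forall h, h \in H :\: stab H ->
    vnorm (x - x0)%R < vnorm (rG h *m x - x0)%R.

Definition minimal_rep (H : {set gT}) (c : gT) : Prop :=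
  exists y, FR H y /\ x0 = (rG c *m y)%R.

(* one step of subgroup decoding: choose d in CL minimizing ||a r - x0||,
   ties broken by the fixed total order induced by the injective key [key] *)
Definition better (key : gT -> nat) (r : 'cV[C]_n) (d a : gT) : bool :=
  (vnorm (rG d *m r - x0)%R < vnorm (rG a *m r - x0)%R)
  || ((vnorm (rG d *m r - x0)%R == vnorm (rG a *m r - x0)%R)
      && (key d <= key a)%N).

Definition dec_choice (key : gT -> nat) (CL : {set gT}) (r : 'cV[C]_n) : gT :=
  odflt 1 [pick d in CL | [forall a in CL, better key r d a]].

Fixpoint dec_state (key : gT -> nat) (CL : nat -> {set gT}) (r : 'cV[C]_n)
    (k : nat) : 'cV[C]_n * gT :=
  match k with
  | 0 => (r, 1)
  | k'.+1 =>
      let st := dec_state key CL r k' in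
      let d := dec_choice key (CL k'.+1) st.1 in
      ((rG d *m st.1)%R, d * st.2)
  end.

Definition subgroup_decode (key : gT -> nat) (CL : nat -> {set gT}) (m : nat)
    (r : 'cV[C]_n) : gT := (dec_state key CL r m).2.

Definition decodes_correctly_with_noise (key : gT -> nat) (CL : nat -> {set gT})
    (m : nat) : Prop :=
  exists2 delta : R, 0 < delta &
    forall g r, g \in G -> vnorm (r - rG (g^-1)%g *m x0)%R < delta ->
      subgroup_decode key CL m r = g.

End Defs.

(* Main.v *)
Require Import Defs.
From HB Require Import structures.
From mathcomp Require Import all_boot all_order all_algebra all_fingroup.
From mathcomp Require Import mxrepresentation complex reals.
From mathcomp Require Import ring lra.
Import Order.TTheory GRing.Theory Num.Theory.
Local Open Scope ring_scope.

Module Helpers.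
Local Open Scope complex_scope.
Set Implicit Arguments.
Unset Strict Implicit.
Unset Printing Implicit Defensive.
Section Norms.
Variable R : realType.
Local Notation C := R[i].

Definition N2 n (x : 'cV[C]_n) : R := \sum_(i < n) cnorm2 (x i 0).

Lemma cnorm2_ge0 (z : C) : 0 <= cnorm2 z.
Proof. rewrite /cnorm2; case: z => a b /=; nra. Qed.

Lemma N2_ge0 n (x : 'cV[C]_n) : 0 <= N2 x.
Proof. by apply: sumr_ge0 => i _; apply: cnorm2_ge0. Qed.

Lemma vnormE n (x : 'cV[C]_n) : vnorm x = Num.sqrt (N2 x).
Proof. by []. Qed.

Lemma vnorm_ge0 n (x : 'cV[C]_n) : 0 <= vnorm x.
Proof. exact: sqrtr_ge0. Qed.

Lemma cnorm2_conj (z : C) : (cnorm2 z)%:C = (conjc z) * z.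
Proof.
case: z => a b; rewrite /cnorm2 /=; apply/eqP; rewrite eq_complex /=.
apply/andP; split; apply/eqP; ring.
Qed.

Definition cadj p q (A : 'M[C]_(p, q)) : 'M[C]_(q, p) := (map_mx (@conjc R) A)^T.

Lemma N2_adj n (x : 'cV[C]_n) : (N2 x)%:C = (cadj x *m x) 0 0.
Proof.
rewrite mxE /N2 rmorph_sum; apply: eq_bigr => i _.
by rewrite !mxE -cnorm2_conj.
Qed.

Lemma N2_unitary n (A : 'M[C]_n) (x : 'cV[C]_n) :
  unitary_mx A -> N2 (A *m x) = N2 x.
Proof.
move=> HA; apply: complexI; rewrite !N2_adj.
have H1 : cadj A *m A = 1%:M by apply: mulmx1C; exact: HA.
rewrite /cadj map_mxM trmx_mul -mulmxA (mulmxA _ A x).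
by rewrite -/(cadj A) H1 mul1mx.
Qed.

Lemma vnorm_unitary n (A : 'M[C]_n) (x : 'cV[C]_n) :
  unitary_mx A -> vnorm (A *m x) = vnorm x.
Proof. by move=> HA; rewrite !vnormE N2_unitary. Qed.

Definition Dot n (x y : 'cV[C]_n) : R :=
  \sum_(i < n) (complex.Re (x i 0) * complex.Re (y i 0)
                + complex.Im (x i 0) * complex.Im (y i 0)).

Lemma N2D n (x y : 'cV[C]_n) : N2 (x + y) = N2 x + N2 y + 2 * Dot x y.
Proof.
rewrite /N2 /Dot mulr_sumr -!big_split /=; apply: eq_bigr => i _.
rewrite !mxE; case: (x i 0) => a b; case: (y i 0) => c d; rewrite /cnorm2 /=.
ring.
Qed.

Lemma N2_eq0_Dot n (x y : 'cV[C]_n) : N2 x = 0 -> Dot x y = 0.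
Proof.
move=> H0; rewrite /Dot; apply: big1 => i _.
have := psumr_eq0P (fun i _ => cnorm2_ge0 (x i 0)) H0 (i := i) isT.
rewrite /cnorm2; case: (x i 0) => a b /= Hab.
have Ha : a = 0 by nra.
have Hb : b = 0 by nra.
by rewrite Ha Hb; ring.
Qed.

Lemma DotC n (x y : 'cV[C]_n) : Dot x y = Dot y x.
Proof. by rewrite /Dot; apply: eq_bigr => i _; ring. Qed.

Lemma CS n (x y : 'cV[C]_n) : Dot x y <= vnorm x * vnorm y.
Proof.
rewrite !vnormE.
have [Hx|Hx] := eqVneq (N2 x) 0.
  by rewrite N2_eq0_Dot // Hx sqrtr0 mul0r.
have [Hy|Hy] := eqVneq (N2 y) 0.
  by rewrite DotC N2_eq0_Dot // Hy sqrtr0 mulr0.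
set sx := Num.sqrt (N2 x); set sy := Num.sqrt (N2 y).
have sx0 : 0 < sx by rewrite sqrtr_gt0 lt_def Hx N2_ge0.
have sy0 : 0 < sy by rewrite sqrtr_gt0 lt_def Hy N2_ge0.
have ex : sx ^+ 2 = N2 x by rewrite sqr_sqrtr // N2_ge0.
have ey : sy ^+ 2 = N2 y by rewrite sqr_sqrtr // N2_ge0.
have key : 2 * (sx * sy) * Dot x y <= sy ^+ 2 * N2 x + sx ^+ 2 * N2 y.
  rewrite /Dot /N2 !mulr_sumr -big_split /=; apply: ler_sum => i _.
  rewrite /cnorm2; case: (x i 0) => a b; case: (y i 0) => c d /=.
  rewrite -subr_ge0.
  have -> : sy ^+ 2 * (a ^+ 2 + b ^+ 2) + sx ^+ 2 * (c ^+ 2 + d ^+ 2) -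
     2 * (sx * sy) * (a * c + b * d) = (sy * a - sx * c) ^+ 2 + (sy * b - sx * d) ^+ 2 by ring.
  by rewrite addr_ge0 // sqr_ge0.
rewrite ex ey in key.
have : 2 * (sx * sy) * Dot x y <= 2 * (sx * sy) * (sx * sy).
  by rewrite -ex -ey in key *; nra.
move=> H; have Hp : 0 < 2 * (sx * sy) by nra.
by rewrite -(ler_pM2l Hp).
Qed.

Lemma vnormD n (x y : 'cV[C]_n) : vnorm (x + y) <= vnorm x + vnorm y.
Proof.
have h1 := CS x y.
have ex : vnorm x ^+ 2 = N2 x by rewrite sqr_sqrtr // N2_ge0.
have ey : vnorm y ^+ 2 = N2 y by rewrite sqr_sqrtr // N2_ge0.
have h2 : N2 (x + y) <= (vnorm x + vnorm y) ^+ 2.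
  rewrite N2D -ex -ey; nra.
rewrite vnormE; apply: le_trans (ler_wsqrtr h2) _.
by rewrite sqrtr_sqr ger0_norm // addr_ge0 // vnorm_ge0.
Qed.

Lemma vnormN n (x : 'cV[C]_n) : vnorm (- x) = vnorm x.
Proof.
rewrite !vnormE /N2; congr Num.sqrt; apply: eq_bigr => i _.
rewrite mxE /cnorm2; case: (x i 0) => a b /=; ring.
Qed.

Lemma vnorm_sym n (x y : 'cV[C]_n) : vnorm (x - y) = vnorm (y - x).
Proof. by rewrite -vnormN opprB. Qed.

Lemma vnorm_tri n (x y z : 'cV[C]_n) : vnorm (x - z) <= vnorm (x - y) + vnorm (y - z).
Proof. by have := vnormD (x - y) (y - z); rewrite addrA subrK. Qed.

Lemma vnorm0 n : vnorm (0 : 'cV[C]_n) = 0.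
Proof.
rewrite vnormE /N2 big1 ?sqrtr0 // => i _; rewrite mxE /cnorm2 /=; ring.
Qed.

Lemma vnorm_gt0 n (x : 'cV[C]_n) : x != 0 -> 0 < vnorm x.
Proof.
move=> Hx; rewrite vnormE sqrtr_gt0 lt_def N2_ge0 andbT.
apply/negP => /eqP H0; move/negP: Hx; apply; apply/eqP/matrixP => i j.
rewrite (ord1 j) mxE.
have := psumr_eq0P (fun i _ => cnorm2_ge0 (x i 0)) H0 (i := i) isT.
rewrite /cnorm2; case: (x i 0) => a b /= Hab.
have Ha : a = 0 by nra.
have Hb : b = 0 by nra.
by rewrite Ha Hb.
Qed.

End Norms.

Lemma uniq_map_inj (T1 T2 : eqType) (f : T1 -> T2) (s : seq T1) :
  uniq (map f s) -> {in s &, injective f}.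
Proof.
elim: s => [|y s IH] //= /andP [Hy Hu] u w.
rewrite !inE => /orP [/eqP ->|Hu'] /orP [/eqP ->|Hw'] // Hf.
- by move/negP: Hy; case; rewrite Hf map_f.
- by move/negP: Hy; case; rewrite -Hf map_f.
- exact: IH.
Qed.

Lemma min_pos (R : realFieldType) (T : finType) (P : pred T) (f : T -> R) :
  (forall x, P x -> 0 < f x) -> exists2 d : R, 0 < d & forall x, P x -> d <= f x.
Proof.
move=> Hf.
suff [d d0 Hd] : exists2 d : R, 0 < d & forall x, x \in enum T -> P x -> d <= f x.
  by exists d => // x; apply: Hd; rewrite mem_enum.
elim: (enum T) => [|y s [d d0 Hd]]; first by exists 1.
case Py: (P y).
- exists (Num.min d (f y)); first by rewrite lt_min d0 Hf.
  move=> x; rewrite inE => /orP [/eqP ->|xs] Px; first by rewrite ge_min lexx orbT.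
  by rewrite ge_min Hd.
- exists d => // x; rewrite inE => /orP [/eqP ->|xs] Px; first by rewrite Py in Px.
  exact: Hd.
Qed.

Section Main.
Variables (R : realType) (n : nat) (gT : finGroupType) (G : {group gT}).
Variable rG : mx_representation R[i] G n.
Variable x0 : 'cV[R[i]]_n.

Lemma dec_choice_eq (key : gT -> nat) (CL : {set gT}) (r : 'cV[R[i]]_n) c :
  c \in CL ->
  (forall a, a \in CL -> a != c ->
     vnorm (rG c *m r - x0) < vnorm (rG a *m r - x0)) ->
  dec_choice rG x0 key CL r = c.
Proof.
move=> cC Hc; rewrite /dec_choice.
case: pickP => [d /andP [dC /forall_inP Hd]|H] /=.
  apply/eqP; apply/negPn/negP => ndc.
  have := Hd c cC; rewrite /better.
  have := Hc d dC ndc => lt.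
  by rewrite ltNge (ltW lt) /= (gt_eqF lt).
have := H c; rewrite cC /=; move/negP; case.
apply/forall_inP => a aC; rewrite /better.
have [->|nac] := eqVneq a c; first by rewrite eqxx leqnn orbT.
by rewrite Hc.
Qed.


Fixpoint prodc (c : nat -> gT) (k : nat) : gT :=
  match k with 0 => 1%g | k'.+1 => (c k'.+1 * prodc c k')%g end.

Lemma prodcS c k : prodc c k.+1 = (c k.+1 * prodc c k)%g.
Proof. by []. Qed.

Fixpoint Qprod (c : nat -> gT) (k l : nat) : gT :=
  match l with
  | 0 => 1%g
  | l'.+1 => if (k < l'.+1)%N then (c l'.+1 * Qprod c k l')%g else 1%g
  end.

Lemma Qprod_in (CL : nat -> {set gT}) c k l :
  (forall i, (k < i <= l)%N -> c i \in CL i) -> Qprod c k l \in ind_CL CL k l.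
Proof.
elim: l => [|l IH] H /=; first by rewrite set11.
case: ifP => kl; last by rewrite set11.
apply: mem_mulg; first by apply: H; rewrite kl leqnn.
apply: IH => i /andP [ki il]; apply: H; rewrite ki /=; exact: leqW.
Qed.

Lemma Qprod_nn c k : Qprod c k k = 1%g.
Proof. by case: k => //= k; rewrite ltnn. Qed.

Lemma prod_split c k l : (k <= l)%N -> prodc c l = (Qprod c k l * prodc c k)%g.
Proof.
elim: l => [|l IH] kl.
  by move: kl; rewrite leqn0 => /eqP ->; rewrite /= mul1g.
have [->|nkl] := eqVneq k l.+1; first by rewrite Qprod_nn mul1g.
have kl' : (k <= l)%N by rewrite -ltnS ltn_neqAle nkl kl.
by rewrite /= ltnS kl' IH // mulgA.
Qed.

Lemma eq_prodc c c' k : (forall i, (1 <= i <= k)%N -> c i = c' i) ->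
  prodc c k = prodc c' k.
Proof.
elim: k => [|k IH] H //=.
rewrite H ?leqnn // IH // => i /andP [i1 ik]; apply: H; rewrite i1; exact: leqW.
Qed.

Lemma prodc_in (K : {group gT}) c k :
  (forall i, (1 <= i <= k)%N -> c i \in K) -> prodc c k \in K.
Proof.
elim: k => [|k IH] Hc /=; first exact: group1.
rewrite groupM // ?Hc ?leqnn // IH // => i /andP [i1 ik]; apply: Hc; rewrite i1; exact: leqW.
Qed.

End Main.

Lemma tri_aux (R : realDomainType) (a b dd del : R) :
  a <= dd + b -> dd < del -> a < b + del.
Proof. move=> h1 h2; lra. Qed.

Lemma fin_aux (R : realFieldType) (nc ec na ea d : R) :
  nc < ec + d -> ea < na + d -> d <= (ea - ec) / 2 -> nc < na.
Proof. move=> h1 h2 h3; lra. Qed.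

End Helpers.
Import Helpers.

Theorem mainTheorem5 (R : realType) (n : nat) (gT : finGroupType) (G : {group gT})
    (rG : mx_representation R[i] G n)
    (Hunit : forall g, g \in G -> unitary_mx (rG g))
    (Hfaithful : mx_faithful rG)
    (x0 : 'cV[R[i]]_n) (Hx0 : vnorm x0 = 1) (Horbit : full_orbit rG x0)
    (m : nat) (Gs : nat -> {group gT})
    (HG0 : Gs 0%N = 1%G) (HGm : Gs m = G)
    (Hchain : forall k, (k < m)%N -> Gs k \proper Gs k.+1)
    (CL : nat -> {set gT})
    (HCL : forall k, (1 <= k <= m)%N -> coset_leaders (Gs k.-1) (Gs k) (CL k))
    (key : gT -> nat) (Hkey : injective key)
    (Hmin : forall k, (1 <= k < m)%N ->
       forall c, c \in ind_CL CL k m -> minimal_rep rG x0 (Gs k) c) :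
  decodes_correctly_with_noise rG x0 key CL m.
Proof.
have sub : forall i j, (i <= j)%N -> (j <= m)%N -> Gs i \subset Gs j.
  move=> i j; elim: j => [|j IH] ij jm.
    by move: ij; rewrite leqn0 => /eqP ->.
  have [->|nij] := eqVneq i j.+1; first exact: subxx.
  have ij' : (i <= j)%N by rewrite -ltnS ltn_neqAle nij ij.
  exact: subset_trans (IH ij' (ltnW jm)) (proper_sub (Hchain j jm)).
have GsG : forall i, (i <= m)%N -> Gs i \subset G.
  by move=> i im; rewrite -HGm; apply: sub.
have CLsub : forall i, (1 <= i <= m)%N -> CL i \subset Gs i.
  by move=> i Hi; case: (HCL i Hi).
have CLG : forall i a, (1 <= i <= m)%N -> a \in CL i -> a \in G.
  move=> i a Hi aC; apply: (subsetP (GsG i _)); first by case/andP: Hi.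
  exact: (subsetP (CLsub i Hi)).
have inj : forall u w, u \in G -> w \in G -> rG u *m x0 = rG w *m x0 -> u = w.
  move=> u w uG wG Huw.
  have Hu : uniq [seq rG g *m x0 | g in G].
    by apply/negPn; rewrite -ltn_size_undup Horbit size_image ltnn.
  by apply: (uniq_map_inj Hu) => //; rewrite mem_enum.
set e := fun w => vnorm (rG w *m x0 - x0).
have Hpos : forall p : gT * gT, e p.1 != e p.2 -> 0 < `|e p.1 - e p.2| / 2.
  by move=> p Hp; rewrite divr_gt0 // normr_gt0 subr_eq0.
have [d d0 Hd] := min_pos Hpos.
exists d => // g r gG Hr.
have dec : forall k, (k <= m)%N -> forall x, x \in Gs k ->
    exists c : nat -> gT, (forall i, (1 <= i <= k)%N -> c i \in CL i) /\ x = prodc c k.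
  elim=> [|k IH] km x xk.
    exists (fun _ => 1%g); split => [i /andP [i1 i0]|].
      by have := leq_trans i1 i0.
    by move: xk; rewrite HG0 inE => /eqP.
  have Hk : (1 <= k.+1 <= m)%N by rewrite ltn0Sn km.
  case: (HCL k.+1 Hk) => [_ _ Hex].
  have [c' [[c'C xc'] _]] := Hex x xk.
  case/lcosetP: xc' => y yk ->.
  have [c [Hc ->]] := IH (ltnW km) y yk.
  exists (fun i => if i == k.+1 then c' else c i); split.
    move=> i Hi; case: eqP => [->|/eqP ni] //; apply: Hc.
    by case/andP: Hi => i1 ik; rewrite i1 -ltnS ltn_neqAle ni ik.
  rewrite prodcS eqxx; congr (_ * _)%g; apply: eq_prodc => i /andP [_ ik].
  by rewrite ifN // neq_ltn ltnS ik.
have gm : g \in Gs m by rewrite HGm.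
have [c [Hc Hgc]] := dec m (leqnn m) g gm.
have Pin : forall k, (k <= m)%N -> prodc c k \in G.
  move=> k km; apply: prodc_in => i /andP [i1 ik].
  apply: (CLG i); first by rewrite i1 (leq_trans ik km).
  by apply: Hc; rewrite i1 (leq_trans ik km).
have st : forall k, (k <= m)%N ->
    dec_state rG x0 key CL r k = (rG (prodc c k) *m r, prodc c k).
  elim=> [|k IH] km /=; first by rewrite repr_mx1 mul1mx.
  have km' := ltnW km.
  rewrite IH //=.
  have Hk : (1 <= k.+1 <= m)%N by rewrite ltn0Sn km.
  have ck := Hc k.+1 Hk.
  have ckG := CLG _ _ Hk ck.
  have PG := Pin k km'.
  rewrite (dec_choice_eq key ck).
    by rewrite mulmxA -repr_mxM.
  move=> a aC nac.
  have aG := CLG _ _ Hk aC.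
  set P := prodc c k; set cc := c k.+1.
  set h := (g^-1)%g.
  have hG : h \in G by rewrite groupV.
  have noise : forall w, w \in G ->
      vnorm (rG w *m (rG P *m r) - x0) < e (w * P * h)%g + d /\
      e (w * P * h)%g < vnorm (rG w *m (rG P *m r) - x0) + d.
    move=> w wG.
    have wPG : (w * P)%g \in G by rewrite groupM.
    have Hdiff : vnorm (rG w *m (rG P *m r) - rG (w * P * h)%g *m x0) < d.
      have E1 : rG w *m (rG P *m r) = rG (w * P)%g *m r by rewrite mulmxA repr_mxM.
      have E2 : rG (w * P * h)%g = rG (w * P)%g *m rG h by rewrite repr_mxM.
      rewrite E1 E2 -mulmxA -mulmxBr.
      by rewrite vnorm_unitary; [exact: Hr | exact: Hunit].
    have t1 := vnorm_tri (rG w *m (rG P *m r)) (rG (w * P * h)%g *m x0) x0.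
    have t2 := vnorm_tri (rG (w * P * h)%g *m x0) (rG w *m (rG P *m r)) x0.
    rewrite (vnorm_sym (rG (w * P * h)%g *m x0) (rG w *m (rG P *m r))) in t2.
    rewrite /e; split; apply: tri_aux; [exact: t1 | exact: Hdiff | exact: t2 | exact: Hdiff].
  have strict : e (cc * P * h)%g < e (a * P * h)%g.
    set Q := Qprod c k.+1 m.
    have Hsplit : g = (Q * (cc * P))%g by rewrite Hgc (prod_split _ km) prodcS.
    have QG : Q \in G.
      have -> : Q = (g * (cc * P)^-1)%g by rewrite Hsplit mulgK.
      by rewrite groupM ?groupV // groupM.
    have E1 : (cc * P * h = Q^-1)%g by rewrite /h Hsplit invMg mulKVg.
    have E2 : (a * P * h = (a * cc^-1) * Q^-1)%g.
      by rewrite /h Hsplit !invMg !mulgA mulgK.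
    have hcG : (a * cc^-1)%g \in G by rewrite groupM ?groupV.
    have hc1 : rG (a * cc^-1)%g *m x0 != x0.
      apply/eqP => H; move/eqP: nac; apply.
      have : (a * cc^-1)%g = 1%g by apply: inj => //; rewrite repr_mx1 mul1mx.
      by move/eqP; rewrite -eq_mulgV1 => /eqP.
    rewrite /e E1 E2 (repr_mxM rG hcG (groupVr QG)) -mulmxA.
    case: (ltnP k.+1 m) => [lt | ge].
    - have Hk' : (1 <= k.+1 < m)%N by rewrite ltn0Sn lt.
      have QC : Q \in ind_CL CL k.+1 m.
        apply: Qprod_in => i /andP [ki im]; apply: Hc.
        by rewrite im andbT (leq_trans _ ki).
      have [y [FRy Hxy]] := Hmin _ Hk' _ QC.
      have Hy : rG (Q^-1)%g *m x0 = y.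
        by rewrite [in LHS]Hxy mulmxA -(repr_mxM rG (groupVr QG) QG) mulVg repr_mx1 mul1mx.
      rewrite Hy; apply: FRy.
      have hcK : (a * cc^-1)%g \in Gs k.+1.
        by rewrite groupM ?groupV // (subsetP (CLsub _ Hk)).
      by rewrite /stab !inE hcK negb_and hc1 orbT.
    - have Q1 : Q = 1%g.
        rewrite /Q (_ : m = k.+1) ?Qprod_nn //.
        by apply/eqP; rewrite eqn_leq km ge.
      rewrite Q1 invg1 repr_mx1 !mul1mx subrr vnorm0.
      by apply: vnorm_gt0; rewrite subr_eq0.
  have gap := Hd ((cc * P * h)%g, (a * P * h)%g) (negbT (lt_eqF strict)).
  rewrite /= distrC ger0_norm in gap; last by rewrite subr_ge0 ltW.
  have [n1 _] := noise cc ckG.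
  have [_ n2] := noise a aG.
  exact: fin_aux n1 n2 gap.
by rewrite /subgroup_decode st // -Hgc.
Qed.
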